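(* For real parameters $\alpha,\delta$ define $C:[0,1]^2\to\mathbb{R}$ by $$C(u,v;\delta,\alpha)=uv+\delta\left(1-e^{\alpha(u-u^2)}\right)\left(1-e^{\alpha(v-v^2)}\right).$$ Let $$\delta^{\star}(\alpha)=\begin{cases}\dfrac{1}{\alpha^2}, & \alpha\in(-\infty,2]\setminus\{0\},\\[2mm] \dfrac{1}{2\alpha}\exp\left\{1-\dfrac{\alpha}{2}\right\}, & \alpha>2.\end{cases}$$ Then: (i) if $\alpha=0$, then for every $\delta\in\mathbb{R}$, $C(\cdot,\cdot;\delta,0)$ is the product copula $C(u,v)=uv$; (ii) if $\alpha\neq 0$ and $|\delta|\le\delta^{\star}(\alpha)$, then $C(\cdot,\cdot;\delta,\alpha)$ is a bivariate copula, i.e. $C(u,0)=C(0,v)=0$, $C(u,1)=u$, $C(1,v)=v$ for all $u,v\in[0,1]$, and $C(u_2,v_2)-C(u_1,v_2)-C(u_2,v_1)+C(u_1,v_1)\ge 0$ for all $0\le u_1<u_2\le1$, $0\le v_1<v_2\le 1$. Its density is $$c(u,v)=\frac{\partial^2 C}{\partial u\,\partial v}=1+\alpha^2\delta(1-2u)(1-2v)\exp\{\alpha(u-u^2+v-v^2)\}\ge 0\quad\text{on }[0,1]^2.$$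
   Context: A bivariate copula is a function $C:[0,1]^2\to[0,1]$ satisfying the stated boundary conditions and the 2-increasing property. *)

(* Defs.v *)
From Stdlib Require Import Reals Lra.
From Coquelicot Require Import Coquelicot.
Open Scope R_scope.

Definition Cfam (delta alpha : R) (u v : R) : R :=
  u * v + delta * (1 - exp (alpha * (u - u ^ 2))) * (1 - exp (alpha * (v - v ^ 2))).

Definition cdens (delta alpha : R) (u v : R) : R :=
  1 + alpha ^ 2 * delta * (1 - 2 * u) * (1 - 2 * v)
      * exp (alpha * (u - u ^ 2 + v - v ^ 2)).

(* delta^*(alpha) (only used for alpha <> 0). *)
Definition delta_star (alpha : R) : R :=
  if Rle_dec alpha 2 then 1 / alpha ^ 2
  else 1 / (2 * alpha) * exp (1 - alpha / 2).

Definition is_copula (C : R -> R -> R) : Prop :=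
  (forall u, 0 <= u <= 1 -> C u 0 = 0 /\ C 0 u = 0 /\ C u 1 = u /\ C 1 u = u) /\
  (forall u1 u2 v1 v2, 0 <= u1 -> u1 < u2 -> u2 <= 1 -> 0 <= v1 -> v1 < v2 -> v2 <= 1 ->
     C u2 v2 - C u1 v2 - C u2 v1 + C u1 v1 >= 0).

(* Main.v *)
Require Import Defs.
From Stdlib Require Import Reals Lra Psatz.
From Coquelicot Require Import Coquelicot.
Open Scope R_scope.

Definition gf (alpha u : R) := (1 - 2 * u) * exp (alpha * (u - u ^ 2)).
Definition hf (alpha u : R) := 1 - exp (alpha * (u - u ^ 2)).

Lemma exp_le_mono x y : x <= y -> exp x <= exp y.
Proof. intro H. destruct (Rle_lt_or_eq_dec _ _ H). left; apply exp_increasing; auto. subst; lra. Qed.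

Lemma key (alpha delta u : R) : alpha <> 0 -> Rabs delta <= delta_star alpha ->
  0 <= u <= 1 -> alpha ^ 2 * Rabs delta * (gf alpha u) ^ 2 <= 1.
Proof.
  intros Ha Hd Hu. unfold gf.
  set (s := (1 - 2*u)^2).
  assert (Hs0 : 0 <= s) by (unfold s; apply pow2_ge_0).
  assert (Hs1 : s <= 1) by (unfold s; simpl; nra).
  assert (E : ((1 - 2 * u) * exp (alpha * (u - u ^ 2))) ^ 2 = s * exp (alpha * (1 - s) / 2)).
  { replace (alpha * (1 - s) / 2) with (alpha * (u - u ^ 2) + alpha * (u - u ^ 2)) by (unfold s; field).
    rewrite exp_plus. unfold s. ring. }
  rewrite E. clear E.
  assert (Ha2 : 0 < alpha ^ 2) by (apply pow_lt_0_compat || nra).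
  unfold delta_star in Hd. destruct (Rle_dec alpha 2) as [Hl|Hl].
  - assert (HA : alpha ^ 2 * Rabs delta <= 1).
    { apply Rmult_le_reg_l with (/ alpha^2). apply Rinv_0_lt_compat; lra.
      rewrite <- Rmult_assoc, Rinv_l by lra. lra. }
    assert (H1 : exp (alpha * (1 - s) / 2) <= exp (1 - s)).
    { apply exp_le_mono. nra. }
    assert (H2 : s * exp (1 - s) <= 1).
    { assert (Hx := exp_ineq1_le (s - 1)).
      assert (Hp : exp (s - 1) * exp (1 - s) = 1) by (rewrite <- exp_plus, <- exp_0; f_equal; ring).
      assert (0 < exp (1 - s)) by apply exp_pos. nra. }
    assert (0 <= Rabs delta) by apply Rabs_pos.
    assert (0 < exp (alpha * (1 - s) / 2)) by apply exp_pos.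
    assert (0 <= alpha^2 * Rabs delta) by nra.
    assert (s * exp (alpha * (1 - s) / 2) <= 1) by nra. nra.
  - assert (Hal : 2 < alpha) by lra.
    set (x := alpha * s / 2).
    assert (Hx := exp_ineq1_le (x - 1)).
    assert (Hp : exp (x - 1) * exp (1 - x) = 1) by (rewrite <- exp_plus, <- exp_0; f_equal; ring).
    assert (H2 : x * exp (1 - x) <= 1) by (assert (0 < exp (1 - x)) by apply exp_pos; nra).
    assert (Hdd : alpha ^ 2 * Rabs delta <= alpha / 2 * exp (1 - alpha / 2)).
    { replace (alpha / 2 * exp (1 - alpha/2)) with (alpha^2 * (1 / (2 * alpha) * exp (1 - alpha / 2))) by (field; lra).
      apply Rmult_le_compat_l; lra. }
    assert (Hq : alpha / 2 * exp (1 - alpha / 2) * (s * exp (alpha * (1 - s) / 2)) = x * exp (1 - x)).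
    { unfold x. replace (alpha / 2 * exp (1 - alpha / 2) * (s * exp (alpha * (1 - s) / 2)))
        with (alpha * s / 2 * (exp (1 - alpha / 2) * exp (alpha * (1 - s) / 2))) by field.
      rewrite <- exp_plus. f_equal. f_equal. field. }
    assert (0 < exp (alpha * (1 - s) / 2)) by apply exp_pos.
    assert (0 <= s * exp (alpha * (1 - s) / 2)) by nra. nra.
Qed.

Lemma prod_bound (A a b : R) : 0 <= A -> A * a ^ 2 <= 1 -> A * b ^ 2 <= 1 ->
  A * Rabs (a * b) <= 1.
Proof.
  intros HA H1 H2. rewrite Rabs_mult.
  assert (Ea : a ^ 2 = Rabs a ^ 2) by (unfold Rabs; destruct (Rcase_abs a); ring).
  assert (Eb : b ^ 2 = Rabs b ^ 2) by (unfold Rabs; destruct (Rcase_abs b); ring).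
  rewrite Ea in H1; rewrite Eb in H2.
  assert (0 <= Rabs a) by apply Rabs_pos. assert (0 <= Rabs b) by apply Rabs_pos.
  assert (HH : (A * (Rabs a * Rabs b)) ^ 2 <= 1).
  { replace ((A * (Rabs a * Rabs b)) ^ 2) with ((A * Rabs a ^ 2) * (A * Rabs b ^ 2)) by ring.
    assert (0 <= A * Rabs a ^2) by nra. assert (0 <= A * Rabs b ^2) by nra. nra. }
  assert (0 <= A * (Rabs a * Rabs b)) by (apply Rmult_le_pos; [|apply Rmult_le_pos]; auto).
  set (y := A * (Rabs a * Rabs b)) in *. clearbody y. simpl in HH.
  destruct (Rle_dec y 1); auto. nra.
Qed.

Lemma hderiv (alpha c : R) : derivable_pt_lim (hf alpha) c (- alpha * gf alpha c).
Proof.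
  apply is_derive_Reals. unfold hf, gf. auto_derive; auto.
  replace (alpha * (c + - (c * (c * 1)))) with (alpha * (c - c ^ 2)) by ring. ring.
Qed.

Lemma main_ineq (alpha delta a b : R) : alpha <> 0 -> Rabs delta <= delta_star alpha ->
  0 <= a <= 1 -> 0 <= b <= 1 -> Rabs (alpha ^ 2 * delta * (gf alpha a * gf alpha b)) <= 1.
Proof.
  intros. rewrite !Rabs_mult. rewrite (Rabs_right (alpha^2)) by (apply Rle_ge; nra).
  rewrite <- (Rabs_mult (gf alpha a)).
  apply prod_bound; [assert (0 <= Rabs delta) by apply Rabs_pos; nra| apply key; auto | apply key; auto].
Qed.

Theorem mainTheorem1 :
  (forall delta : R,
     (forall u v, 0 <= u <= 1 -> 0 <= v <= 1 -> Cfam delta 0 u v = u * v) /\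
     is_copula (Cfam delta 0)) /\
  (forall alpha delta : R, alpha <> 0 -> Rabs delta <= delta_star alpha ->
     is_copula (Cfam delta alpha) /\
     (forall u v, 0 <= u <= 1 -> 0 <= v <= 1 ->
        is_derive (fun x => Derive (fun y => Cfam delta alpha x y) v) u
                  (cdens delta alpha u v)) /\
     (forall u v, 0 <= u <= 1 -> 0 <= v <= 1 -> cdens delta alpha u v >= 0)).
Proof.
  assert (Hb : forall delta alpha u, 0 <= u <= 1 ->
    Cfam delta alpha u 0 = 0 /\ Cfam delta alpha 0 u = 0 /\ Cfam delta alpha u 1 = u /\ Cfam delta alpha 1 u = u).
  { intros. unfold Cfam. replace (0 - 0^2) with 0 by ring. replace (1 - 1^2) with 0 by ring.
    rewrite !Rmult_0_r, !exp_0. repeat split; ring. }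
  split.
  - intro delta.
    assert (E : forall u v, Cfam delta 0 u v = u * v).
    { intros. unfold Cfam. rewrite !Rmult_0_l, exp_0. ring. }
    split; [intros; apply E|]. split; [intros; apply Hb; auto|].
    intros. rewrite !E. nra.
  - intros alpha delta Ha Hd. split; [|split].
    + split; [intros; apply Hb; auto|].
      intros u1 u2 v1 v2 H1 H2 H3 H4 H5 H6.
      destruct (MVT_cor2 (hf alpha) (fun c => - alpha * gf alpha c) u1 u2 H2 (fun c _ => hderiv alpha c)) as [c [Ec Hc]].
      destruct (MVT_cor2 (hf alpha) (fun c => - alpha * gf alpha c) v1 v2 H5 (fun c _ => hderiv alpha c)) as [d [Ed Hd']].
      assert (V : Cfam delta alpha u2 v2 - Cfam delta alpha u1 v2 - Cfam delta alpha u2 v1 + Cfam delta alpha u1 v1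
        = (u2 - u1) * (v2 - v1) + delta * (hf alpha u2 - hf alpha u1) * (hf alpha v2 - hf alpha v1)).
      { unfold Cfam, hf. ring. }
      rewrite V, Ec, Ed.
      assert (M := main_ineq alpha delta c d Ha Hd ltac:(lra) ltac:(lra)).
      apply Rabs_le_between in M.
      replace (delta * (- alpha * gf alpha c * (u2 - u1)) * (- alpha * gf alpha d * (v2 - v1)))
        with ((alpha ^ 2 * delta * (gf alpha c * gf alpha d)) * ((u2 - u1) * (v2 - v1))) by ring.
      assert (0 < (u2 - u1) * (v2 - v1)) by nra. nra.
    + intros u v Hu Hv.
      apply is_derive_ext with (fun x => x + delta * hf alpha x * (- alpha * gf alpha v)).
      { intro x. symmetry. apply is_derive_unique. unfold Cfam, hf, gf. auto_derive; auto.
        replace (alpha * (x - x * (x * 1))) with (alpha * (x - x ^ 2)) by ring.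
        replace (alpha * (v + - (v * (v * 1)))) with (alpha * (v - v ^ 2)) by ring. ring. }
      unfold hf, gf, cdens. auto_derive; auto.
      replace (alpha * (u + - (u * (u * 1)))) with (alpha * (u - u ^ 2)) by ring.
      replace (alpha * (v - v * (v * 1))) with (alpha * (v - v ^ 2)) by ring.
      replace (alpha * (u - u ^ 2 + v - v ^ 2)) with (alpha * (u - u^2) + alpha * (v - v^2)) by ring.
      rewrite exp_plus. ring.
    + intros u v Hu Hv.
      assert (M := main_ineq alpha delta u v Ha Hd Hu Hv).
      apply Rabs_le_between in M.
      unfold cdens, gf in *.
      replace (alpha * (u - u ^ 2 + v - v ^ 2)) with (alpha * (u - u^2) + alpha * (v - v^2)) by ring.
      rewrite exp_plus. lra.
Qed.
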